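(* The cone of Hilbert functions of $\Lambda$-modules that are finitely generated in degree zero is simplicial, and its defining inequalities are \[ \frac{H_M(i+1)}{\binom n{i+1}}\le\frac{H_M(i)}{\binom ni},\qquad 0\le i<n. \]
   Context: $\Lambda$ is the standard graded exterior algebra in $n$ variables over a field $\mathbb{k}$ (with its natural $\mathbb{N}^n$-grading). A $\Lambda$-module is a finitely generated graded left $\Lambda$-module which is also a right $\Lambda$-module with $am=(-1)^{\deg a\deg m}ma$ for homogeneous $a\in\Lambda$, $m\in M$. $H_M(i)=\dim_{\mathbb{k}}M_i$ is the Hilbert function. The cone of Hilbert functions is the convex cone in $\mathbb{R}^{\mathbb{N}}$ spanned by the Hilbert functions of all such modules. *)

(* Defs.v *)
From mathcomp Require Import all_boot all_order all_algebra.
From mathcomp Require Import reals.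
Set Implicit Arguments. Unset Strict Implicit. Unset Printing Implicit Defensive.
Import Order.TTheory GRing.Theory Num.Theory.
Local Open Scope ring_scope.

(* The exterior algebra  Lambda = k<e_0,...,e_{n-1}> / (e_j e_l + e_l e_j, e_j^2),
   standard-graded with deg e_j = 1.  A graded left Lambda-module which is
   generated in degree 0 is concentrated in degrees >= 0, so it is given by:
   - finite-dimensional k-vector spaces M_i = 'rV[k]_(dim i), i : nat
     (finite dimensionality of each M_i follows from finite generation);
   - the action of each generator e_j as a linear map M_i -> M_{i+1}
     (row vectors: e_j . v = v *m act j i);
   - the defining relations of Lambda: e_j e_j = 0 and e_j e_l = - e_l e_j;
   - generation in degree 0: M_{i+1} = sum_j e_j M_i for every i.
   The right module structure a m = (-1)^(deg a deg m) m a is then determined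
   (and automatically well defined), so it imposes no further condition. *)
Record LamMod0 (k : fieldType) (n : nat) := {
  ldim : nat -> nat;
  lact : 'I_n -> forall i : nat, 'M[k]_(ldim i, ldim i.+1);
  lact_sq : forall (j : 'I_n) (i : nat), lact j i *m lact j i.+1 = 0;
  lact_anti : forall (j l : 'I_n) (i : nat),
      lact j i *m lact l i.+1 = - (lact l i *m lact j i.+1);
  lact_gen0 : forall i : nat, (1%:M <= \sum_(j < n) <<lact j i>>)%MS
}.

Definition hilb (k : fieldType) (n : nat) (M : LamMod0 k n) (i : nat) : nat :=
  ldim M i.

Definition hilb_cone (R : realType) (k : fieldType) (n : nat) : (nat -> R) -> Prop :=
  fun h => exists (m : nat) (c : 'I_m -> R) (M : 'I_m -> LamMod0 k n),
      (forall t, 0 <= c t) /\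
      (forall i : nat, h i = \sum_(t < m) c t * (hilb (M t) i)%:R).

Definition conic_hull (R : realType) (m : nat) (v : 'I_m -> nat -> R)
  : (nat -> R) -> Prop :=
  fun h => exists c : 'I_m -> R, (forall t, 0 <= c t) /\
      (forall i : nat, h i = \sum_(t < m) c t * v t i).

Definition lin_indep (R : realType) (m : nat) (v : 'I_m -> nat -> R) : Prop :=
  forall c : 'I_m -> R, (forall i : nat, \sum_(t < m) c t * v t i = 0) ->
    forall t, c t = 0.

Definition simplicial (R : realType) (C : (nat -> R) -> Prop) : Prop :=
  exists (m : nat) (v : 'I_m -> nat -> R),
    lin_indep v /\ forall h, C h <-> conic_hull v h.

(* Main.v *)
Require Import Defs.
From mathcomp Require Import all_boot all_order all_algebra.
From mathcomp Require Import reals.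
From mathcomp Require Import zify.
Set Implicit Arguments. Unset Strict Implicit. Unset Printing Implicit Defensive.
Import Order.TTheory GRing.Theory Num.Theory.
Local Open Scope ring_scope.
Section PartA.
Variables (k : fieldType) (n : nat) (M : LamMod0 k n).
Local Notation d := (ldim M).
Local Notation A := (lact M).
Local Notation r := (ldim M 0).

Definition minS (S : {set 'I_n}) : option 'I_n :=
  [pick s in S | [forall t in S, (s <= t)%N]].

Lemma minS_spec (S : {set 'I_n}) (s : 'I_n) : s \in S -> (forall t, t \in S -> (s <= t)%N) -> minS S = Some s.
Proof.
move=> sS Hs; rewrite /minS; case: pickP => [s' /andP [s'S /forall_inP Hs']|H].
  by congr Some; apply/val_inj/eqP; rewrite eqn_leq Hs' // Hs.
by move: (H s); rewrite sS /= => /negbT/negP; case; apply/forall_inP.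
Qed.

Fixpoint mono (i : nat) (S : {set 'I_n}) (b : 'I_r) {struct i} : 'rV[k]_(d i) :=
  match i as i0 return 'rV[k]_(d i0) with
  | 0 => delta_mx 0 b
  | i'.+1 => if minS S is Some s then mono i' (S :\ s) b *m A s i' else 0
  end.

Lemma monoS i (S : {set 'I_n}) (b : 'I_r) (s : 'I_n) : minS S = Some s -> mono i.+1 S b = mono i (S :\ s) b *m A s i.
Proof. by move=> /= ->. Qed.

Lemma mono_key i : forall (S : {set 'I_n}) (b : 'I_r) (s : 'I_n), #|S| = i ->
  (s \in S -> mono i S b *m A s i = 0) /\
  (s \notin S -> exists2 e : k, (e = 1 \/ e = -1) &
      mono i S b *m A s i = e *: mono i.+1 (s |: S) b).
Proof.
elim: i => [|i IH] S b s cS.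
  have -> : S = set0 by apply/eqP; rewrite -cards_eq0 cS.
  split; first by rewrite inE.
  move=> _; exists 1; first by left.
  rewrite scale1r setU0 (monoS _ _ (s:=s)); last first.
    by apply: minS_spec; rewrite ?set11 // => t; rewrite inE => /eqP->.
  by [].
have [t tS] : exists t, t \in S by apply/set0Pn; rewrite -cards_eq0 cS.
case: (@arg_minnP _ t (mem S) (fun u : 'I_n => (u : nat)) tS) => m mS0 mmin.
have mS : m \in S := mS0.
have Hm : minS S = Some m by apply: minS_spec.
have cT : #|S :\ m| = i by move: cS; rewrite (cardsD1 m) mS add1n => -[].
rewrite (monoS _ _ Hm).
have [IH1 IH2] := IH (S :\ m) b s cT.
split.
  move=> sS; have [->|nsm] := eqVneq s m.
    by rewrite -mulmxA lact_sq mulmx0.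
  by rewrite -mulmxA lact_anti mulmxN mulmxA IH1 ?mul0mx ?oppr0 // !inE nsm.
move=> nsS.
have nsT : s \notin S :\ m by rewrite !inE negb_and nsS orbT.
have nsm : s != m by apply: contraNneq nsS => ->.
have [slt|mlt] := ltnP s m.
  exists 1; first by left.
  rewrite -(monoS _ _ Hm) scale1r [RHS](monoS _ _ (s:=s)) ?setU1K //.
  apply: minS_spec; first by rewrite setU11.
  move=> u; rewrite in_setU1 => /predU1P [->//|uS].
  by apply: leq_trans (ltnW slt) (mmin _ uS).
have [e He Hmul] := IH2 nsT.
exists (- e); first by case: He => ->; [right|left; rewrite opprK].
rewrite -mulmxA lact_anti mulmxN mulmxA Hmul -scalemxAl -scaleNr.
congr (_ *: _); rewrite [RHS](monoS _ _ (s:=m)).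
  congr (mono _ _ _ *m _); apply/setP => u; rewrite !inE.
  by case: (eqVneq u m) => [->|]; rewrite ?andbF ?andbT //= ?orbF eq_sym (negbTE nsm).
apply: minS_spec; first by rewrite setU1r.
by move=> u; rewrite in_setU1 => /predU1P [->//|uS]; apply: mmin.
Qed.


Lemma mono_mul_le i (S : {set 'I_n}) (b : 'I_r) (s : 'I_n) m (X : 'M[k]_(m, d i.+1)) :
  #|S| = i -> (s \notin S -> (mono i.+1 (s |: S) b <= X)%MS) ->
  (mono i S b *m A s i <= X)%MS.
Proof.
move=> cS H; have [H1 H2] := mono_key b s cS.
case: (boolP (s \in S)) => sS; first by rewrite H1 // sub0mx.
by have [e _ ->] := H2 sS; rewrite scalemx_sub // H.
Qed.

Definition spanD i : 'M[k]_(d i) :=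
  (\sum_(x : {set 'I_n} * 'I_r | #|x.1| == i) <<mono i x.1 x.2>>)%MS.

Lemma span_full i : ((1%:M : 'M[k]_(d i)) <= spanD i)%MS.
Proof.
elim: i => [|i IH].
  apply/row_subP => b; rewrite row1.
  apply: (sumsmx_sup (set0, b)); first by rewrite /= cards0.
  by rewrite genmxE submx_refl.
apply: submx_trans (lact_gen0 M i) _.
apply/sumsmx_subP => s _; rewrite genmxE.
apply: (submx_trans (B := spanD i *m A s i)).
  by rewrite -{1}[A s i]mul1mx submxMr.
rewrite /spanD sumsmxMr_gen; apply/sumsmx_subP => x /eqP cx.
rewrite genmxE (eqmxMr _ (genmxE _)).
apply: (@mono_mul_le i x.1 x.2 s _ _ cx) => nsx.
apply: (sumsmx_sup (s |: x.1, x.2)); first by rewrite /= cardsU1 nsx cx.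
by rewrite genmxE submx_refl.
Qed.

Lemma bin_inj_gen m (F G : 'I_m -> bool) :
  (\sum_(t < m) F t * 2 ^ t = \sum_(t < m) G t * 2 ^ t)%N -> F =1 G.
Proof.
elim: m F G => [|m IH] F G H t; first by case: t.
move: H; rewrite !big_ord_recl !expn0 !muln1.
have E : forall H : 'I_m.+1 -> bool,
    (\sum_(i < m) H (lift ord0 i) * 2 ^ (lift ord0 i))%N =
    (2 * \sum_(i < m) H (lift ord0 i) * 2 ^ i)%N.
  by move=> H; rewrite big_distrr; apply: eq_bigr => i _; rewrite /= expnS mulnCA.
rewrite !E => H.
have H0 : F ord0 = G ord0.
  by move: H; case: (F ord0); case: (G ord0) => //= H; lia.
rewrite H0 in H; move/addnI/eqP: H; rewrite eqn_pmul2l // => /eqP H.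
have IH' := IH (fun i => F (lift ord0 i)) (fun i => G (lift ord0 i)) H.
by case: (unliftP ord0 t) => [j ->|->] //; apply: IH'.
Qed.

Definition bin (S : {set 'I_n}) : nat := (\sum_(t < n) (t \in S) * 2 ^ t)%N.
Definition key (x : {set 'I_n} * 'I_r) : nat := (bin x.1 * r + x.2)%N.

Lemma key_inj : injective key.
Proof.
move=> [S b] [S' b']; rewrite /key /= => H.
have r0 : (0 < r)%N by apply: leq_ltn_trans (ltn_ord b).
have Hb : b = b' :> nat.
  by move: (congr1 (modn^~ r) H); rewrite /= !modnMDl !modn_small.
rewrite Hb in H; move/addIn/eqP: H; rewrite eqn_pmul2r // => /eqP HS.
congr pair; last exact: val_inj.
by apply/setP => t; exact: bin_inj_gen HS t.
Qed.

Lemma key_add (S : {set 'I_n}) (b : 'I_r) (s : 'I_n) :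
  s \notin S -> key (s |: S, b) = (key (S, b) + 2 ^ s * r)%N.
Proof.
move=> nsS; rewrite /key /bin /= (bigD1 s) //= [in RHS](bigD1 s) //=.
rewrite setU11 (negbTE nsS) mul1n mul0n add0n.
have -> : (\sum_(i < n | i != s) (i \in s |: S) * 2 ^ i =
          \sum_(i < n | i != s) (i \in S) * 2 ^ i)%N.
  by apply: eq_bigr => t nts; rewrite in_setU1 (negbTE nts).
by rewrite mulnDl -addnA addnC.
Qed.

Definition cond (i K : nat) (x : {set 'I_n} * 'I_r) := (#|x.1| == i) && (key x < K)%N.
Definition FK i K : 'M[k]_(d i) := (\sum_(x | cond i K x) <<mono i x.1 x.2>>)%MS.
Definition Std i (x : {set 'I_n} * 'I_r) := (#|x.1| == i) && ~~ (mono i x.1 x.2 <= FK i (key x))%MS.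

Lemma rank_FK i K : \rank (FK i K) = (\sum_(x | cond i K x) Std i x)%N.
Proof.
elim: K => [|K IH].
  by rewrite /FK !big_pred0 ?mxrank0 // => x; rewrite /cond ltn0 andbF.
have Hc : forall x, cond i K.+1 x = cond i K x || ((#|x.1| == i) && (key x == K)).
  by move=> x; rewrite /cond ltnS leq_eqVlt; case: (_ == i); rewrite //= orbC.
case: (pickP (fun x : {set 'I_n} * 'I_r => (#|x.1| == i) && (key x == K))) => [x0 /andP [cx0 /eqP kx0] | Hn].
  have Esplit : forall (R : Type) (idx : R) (op : Monoid.com_law idx) F,
      \big[op/idx]_(x | cond i K.+1 x) F x = op (F x0) (\big[op/idx]_(x | cond i K x) F x).
    move=> R idx op F; rewrite (bigD1 x0) /=; last by rewrite Hc cx0 kx0 eqxx orbT.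
    congr (op _ _); apply: eq_bigl => x; rewrite Hc.
    case: (eqVneq x x0) => [->|nx] /=.
      by rewrite /cond kx0 ltnn andbF andbF.
    rewrite andbT; apply/orb_idr => /andP [cx /eqP kx].
    by move/eqP: nx; case; apply: key_inj; rewrite kx kx0.
  rewrite /FK Esplit Esplit -/(FK i K) -IH /Std kx0 cx0 /=.
  case: (boolP (mono i x0.1 x0.2 <= FK i K)%MS) => H.
    have /addsmx_idPr -> : (<<mono i x0.1 x0.2>> <= FK i K)%MS by rewrite genmxE.
    by rewrite add0n.
  rewrite /=; apply/eqP; rewrite eqn_leq; apply/andP; split.
    have [le _] := mxrank_adds_leqif <<mono i x0.1 x0.2>>%MS (FK i K).
    apply: leq_trans le _; rewrite leq_add2r mxrank_gen.
    exact: rank_leq_row.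
  rewrite add1n (ltn_leqif (mxrank_leqif_sup (addsmxSr _ _))).
  apply: contra H => H; apply: submx_trans H.
  by apply: submx_trans (addsmxSl _ _); rewrite genmxE.
have Hc' : forall x, cond i K.+1 x = cond i K x.
  by move=> x; rewrite Hc; move: (Hn x) => /= ->; rewrite orbF.
by rewrite /FK (eq_bigl _ _ Hc') -/(FK i K) IH; apply: eq_bigl.
Qed.


Definition K0 := (\max_(x : {set 'I_n} * 'I_r) key x).+1.
Lemma condK0 i x : cond i K0 x = (#|x.1| == i).
Proof. by rewrite /cond ltnS leq_bigmax andbT. Qed.

Definition N i := (\sum_(x : {set 'I_n} * 'I_r) Std i x)%N.

Lemma N_rank i : N i = \rank (FK i K0).
Proof.
rewrite rank_FK /N [in RHS]big_mkcond /=; apply: eq_bigr => x _.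
by rewrite condK0 /Std; case: (_ == i).
Qed.

Lemma N_le i : (N i <= d i)%N.
Proof. by rewrite N_rank rank_leq_col. Qed.

Lemma N_ge i : (d i <= N i)%N.
Proof.
rewrite N_rank -{1}(mxrank1 k (d i)); apply: mxrankS.
have -> : FK i K0 = spanD i by rewrite /FK /spanD; apply: eq_bigl => x; rewrite condK0.
exact: span_full.
Qed.

Lemma Std_down i (x : {set 'I_n} * 'I_r) s :
  Std i.+1 x -> s \in x.1 -> Std i (x.1 :\ s, x.2).
Proof.
case: x => S b /= /andP [/eqP cS nS] sS.
have cT : #|S :\ s| = i by move: cS; rewrite (cardsD1 s) sS add1n => -[].
rewrite /Std /= cT eqxx /=; apply: contra nS => H.
have nsT : s \notin S :\ s by rewrite !inE eqxx.
have [_ H2] := mono_key b s cT.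
have [e He Hm] := H2 nsT.
rewrite setD1K // in Hm.
have -> : mono i.+1 S b = e *: (mono i (S :\ s) b *m A s i).
  by rewrite Hm scalerA; case: He => ->; rewrite ?mulr1 ?mulrNN ?mulr1 scale1r.
apply: scalemx_sub.
apply: submx_trans (submxMr (A s i) H) _.
rewrite /FK sumsmxMr_gen; apply/sumsmx_subP => y /andP [/eqP cy ky].
rewrite genmxE (eqmxMr _ (genmxE _)).
apply: (@mono_mul_le i y.1 y.2 s _ _ cy) => nsy.
apply: (sumsmx_sup (s |: y.1, y.2)); last by rewrite genmxE submx_refl.
rewrite /cond /= cardsU1 nsy cy eqxx /=.
have -> : key (S, b) = (key (S :\ s, b) + 2 ^ s * r)%N by rewrite -key_add // setD1K.
have -> : (s |: y.1, y.2) = (s |: y.1, y.2) by [].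
by case: y cy ky nsy => T c /= cy ky nsy; rewrite key_add // ltn_add2r.
Qed.

Lemma count_ineq i : (i.+1 * N i.+1 <= (n - i) * N i)%N.
Proof.
have L : (i.+1 * N i.+1 =
   \sum_(s : 'I_n) #|[set x | Std i.+1 x && (s \in x.1)]|)%N.
  rewrite /N big_distrr /=.
  rewrite (eq_bigr (fun x => \sum_(s : 'I_n) (Std i.+1 x && (s \in x.1) : nat))%N); last first.
    move=> x _; case Sx: (Std i.+1 x) => /=; last by rewrite muln0 big1.
    move: Sx => /andP [/eqP cx _]; rewrite muln1 -cx -sum1_card big_mkcond /=.
    by apply: eq_bigr => s _; case: (s \in x.1).
  rewrite exchange_big /=; apply: eq_bigr => s _.
  by rewrite -sum1dep_card [RHS]big_mkcond /=; apply: eq_bigr => x _; case: (_ && _).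
have R : ((n - i) * N i =
   \sum_(s : 'I_n) #|[set x | Std i x && (s \notin x.1)]|)%N.
  rewrite /N big_distrr /=.
  rewrite (eq_bigr (fun x => \sum_(s : 'I_n) (Std i x && (s \notin x.1) : nat))%N); last first.
    move=> x _; case Sx: (Std i x) => /=; last by rewrite muln0 big1.
    move: Sx => /andP [/eqP cx _]; rewrite muln1.
    have : (#|x.1| + #|~: x.1| = n)%N by rewrite cardsC card_ord.
    rewrite cx => E; have -> : (n - i = #|~: x.1|)%N by lia.
    rewrite -sum1_card big_mkcond /=.
    by apply: eq_bigr => s _; rewrite in_setC; case: (s \in x.1).
  rewrite exchange_big /=; apply: eq_bigr => s _.
  by rewrite -sum1dep_card [RHS]big_mkcond /=; apply: eq_bigr => x _; case: (_ && _).
rewrite L R; apply: leq_sum => s _.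
pose f (x : {set 'I_n} * 'I_r) := (x.1 :\ s, x.2).
have inj : {in [set x | Std i.+1 x && (s \in x.1)] &, injective f}.
  move=> [S b] [S' b']; rewrite !inE /= => /andP [_ sS] /andP [_ sS'] [E ->].
  by rewrite -(setD1K sS) -(setD1K sS') E.
rewrite -(card_in_imset inj); apply: subset_leq_card; apply/subsetP => z.
case/imsetP => x; rewrite inE => /andP [Sx sx] ->.
by rewrite inE Std_down //= !inE eqxx.
Qed.

Lemma hilb_ineq i : (i.+1 * d i.+1 <= (n - i) * d i)%N.
Proof.
apply: leq_trans (leq_mul (leqnn _) (N_ge i.+1)) _.
apply: leq_trans (count_ineq i) _.
exact: leq_mul (leqnn _) (N_le i).
Qed.

End PartA.
Section PartB.
Variables (k : fieldType) (n j : nat).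

Definition Dset i : {set {set 'I_n}} := [set S : {set 'I_n} | (#|S| == i) && (i <= j)%N].
Definition sgn (s : 'I_n) (X : {set 'I_n}) : k := (-1) ^+ #|[set t in X | (t < s)%N]|.
Definition coef (s : 'I_n) (X Y : {set 'I_n}) : k :=
  if (s \notin X) && (Y == s |: X) then sgn s X else 0.
Definition actB (s : 'I_n) i : 'M[k]_(#|Dset i|, #|Dset i.+1|) :=
  \matrix_(x, y) coef s (enum_val x) (enum_val y).
Definition pcoef (s l : 'I_n) (X Z : {set 'I_n}) : k :=
  if [&& s \notin X, l \notin s |: X & Z == l |: (s |: X)]
  then sgn s X * sgn l (s |: X) else 0.

Lemma actB_mul s l i x z :
  (actB s i *m actB l i.+1) x z = pcoef s l (enum_val x) (enum_val z).
Proof.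
rewrite mxE.
have HX := enum_valP x; have HZ := enum_valP z.
case: (boolP (s \in enum_val x)) => sX.
  by rewrite /pcoef sX big1 // => y _; rewrite !mxE /coef sX mul0r.
have HY : s |: enum_val x \in Dset i.+1.
  move: HX HZ; rewrite !inE => /andP [/eqP cX _] /andP [_ hj].
  by rewrite cardsU1 sX cX eqxx /= ltnW.
rewrite (bigD1 (enum_rank_in HY (s |: enum_val x))) //= big1 ?addr0.
  rewrite !mxE enum_rankK_in // /coef sX eqxx /= /pcoef sX /=.
  by case: (_ && _); rewrite ?mulr0.
move=> y ny; rewrite !mxE /coef; case: eqP => [E|]; last by rewrite andbF mul0r.
by exfalso; move/negP: ny; apply; rewrite -[y in y == _](enum_valK_in HY) E.
Qed.

Lemma pcoef_sq (s : 'I_n) (X Z : {set 'I_n}) : pcoef s s X Z = 0.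
Proof. by rewrite /pcoef setU11 andbF. Qed.

Lemma sgn_add (s l : 'I_n) (X : {set 'I_n}) : s \notin X ->
  sgn l (s |: X) = (if (s < l)%N then - sgn l X else sgn l X).
Proof.
move=> sX; rewrite /sgn; case: ifP => h.
  have -> : [set t in s |: X | (t < l)%N] = s |: [set t in X | (t < l)%N].
    apply/setP => t; rewrite !inE; case: (eqVneq t s) => [->|] //=.
  by rewrite cardsU1 !inE (negbTE sX) /= exprS mulN1r.
congr (_ ^+ _); apply: eq_card => t; rewrite !inE; case: (eqVneq t s) => [->|] //=.
by rewrite h (negbTE sX).
Qed.

Lemma pcoef_anti (s l : 'I_n) (X Z : {set 'I_n}) : pcoef s l X Z = - pcoef l s X Z.
Proof.
have [->|nsl] := eqVneq s l; first by rewrite pcoef_sq oppr0.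
rewrite /pcoef !in_setU1 setUCA (eq_sym l s) (negbTE nsl) /=.
case: (boolP (s \in X)) => sX; first by rewrite /= andbF oppr0.
case: (boolP (l \in X)) => lX; first by rewrite /= oppr0.
case: (_ == _); last by rewrite oppr0.
rewrite /= !sgn_add //.
case: (ltngtP s l) => h.
- by rewrite mulrN mulrC.
- by rewrite mulrN opprK mulrC.
- by move/eqP: nsl; case; apply: val_inj.
Qed.

Lemma actB_sq s i : actB s i *m actB s i.+1 = 0.
Proof. by apply/matrixP => x z; rewrite actB_mul pcoef_sq mxE. Qed.

Lemma actB_anti s l i :
  actB s i *m actB l i.+1 = - (actB l i *m actB s i.+1).
Proof.
apply/matrixP => x z; rewrite actB_mul pcoef_anti.
by rewrite [RHS]mxE actB_mul.
Qed.

Lemma actB_gen i : (1%:M <= \sum_(s < n) <<actB s i>>)%MS.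
Proof.
apply/row_subP => z; rewrite row1.
have HZ := enum_valP z.
move: (HZ); rewrite inE => /andP [/eqP cZ hj].
have [s sZ] : exists s, s \in enum_val z.
  by apply/set0Pn; rewrite -cards_eq0 cZ.
have HX : enum_val z :\ s \in Dset i.
  by rewrite inE; move: cZ; rewrite (cardsD1 s) sZ add1n => -[->]; rewrite eqxx ltnW.
pose x := enum_rank_in HX (enum_val z :\ s).
have Hrow : row x (actB s i) = sgn s (enum_val z :\ s) *: delta_mx 0 z.
  apply/rowP => y; rewrite !mxE enum_rankK_in // /coef !inE eqxx /= setD1K //.
  case: (eqVneq y z) => [->|nyz]; first by rewrite !eqxx mulr1.
  have -> : (enum_val y == enum_val z) = false.
    by apply/negbTE; apply: contra nyz => /eqP/enum_val_inj ->.
  by rewrite mulr0.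
have sn0 : sgn s (enum_val z :\ s) != 0 by rewrite /sgn signr_eq0.
apply: (sumsmx_sup s) => //; rewrite genmxE.
have -> : delta_mx 0 z = (sgn s (enum_val z :\ s))^-1 *: row x (actB s i).
  by rewrite Hrow scalerA mulVf // scale1r.
by rewrite scalemx_sub // row_sub.
Qed.

Definition TB : LamMod0 k n :=
  @Build_LamMod0 k n (fun i => #|Dset i|) actB actB_sq actB_anti actB_gen.

Lemma TB_hilb i : hilb TB i = (if (i <= j)%N then 'C(n, i) else 0)%N.
Proof.
rewrite /hilb /=; case: ifP => h.
  rewrite -[in RHS](card_ord n) -card_draws; apply: eq_card => S.
  by rewrite !inE h andbT.
by apply/eqP; rewrite cards_eq0; apply/eqP/setP => S; rewrite !inE h andbF.
Qed.

End PartB.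

Section Final.
Variables (R : realType) (k : fieldType) (n : nat).

Lemma hilb_zero (M : LamMod0 k n) i : (n < i)%N -> hilb M i = 0%N.
Proof.
case: i => [//|m] nm; have := hilb_ineq M m.
have -> : (n - m = 0)%N by lia.
rewrite mul0n leqn0 muln_eq0 /= => /eqP H; exact: H.
Qed.

Local Notation C i := (('C(n, i))%:R : R).

Lemma hilb_ratio (M : LamMod0 k n) i : (i < n)%N ->
  (hilb M i.+1)%:R / C i.+1 <= (hilb M i)%:R / C i :> R.
Proof.
move=> lin.
have C0 : 0 < C i by rewrite ltr0n bin_gt0 ltnW.
have C1 : 0 < C i.+1 by rewrite ltr0n bin_gt0.
rewrite ler_pdivrMr // mulrAC ler_pdivlMr // -!natrM ler_nat.
have H := hilb_ineq M i; have E := mul_bin_left n i.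
rewrite /hilb -(leq_pmul2l (ltn0Sn i)).
nia.
Qed.

Definition ray (t : 'I_n.+1) (i : nat) : R :=
  ((if (i <= t)%N then 'C(n, i) else 0)%N)%:R.

Lemma sum_ray (c : 'I_n.+1 -> R) i :
  \sum_(t < n.+1) c t * ray t i = C i * \sum_(t < n.+1 | (i <= t)%N) c t.
Proof.
rewrite mulr_sumr [RHS]big_mkcond; apply: eq_bigr => t _.
by rewrite /ray; case: ifP => _; rewrite ?mulr0 // mulrC.
Qed.

Definition q (h : nat -> R) u := h u / C u.

Lemma telesc (h : nat -> R) i : (i <= n.+1)%N ->
  \sum_(t < n.+1 | (i <= t)%N) (q h t - q h t.+1) = q h i - q h n.+1.
Proof.
move=> lin.
have E := @big_geq_mkord _ _ (@GRing.add R) i n.+1 xpredT (fun t => q h t - q h t.+1).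
rewrite (eq_bigl (fun t : 'I_n.+1 => xpredT (t : nat) && (i <= t)%N)) // -E /=.
rewrite (eq_bigr (fun t => - (q h t.+1 - q h t))); last by move=> t _; rewrite opprB.
by rewrite sumrN telescope_sumr // opprB.
Qed.

End Final.

Theorem corollary4p18 (R : realType) (k : fieldType) (n : nat) :
  simplicial (@hilb_cone R k n) /\
  (forall h : nat -> R, @hilb_cone R k n h <->
     [/\ (forall i : nat, (n < i)%N -> h i = 0),
         0 <= h n &
         (forall i : nat, (i < n)%N ->
            h i.+1 / ('C(n, i.+1))%:R <= h i / ('C(n, i))%:R)]).
Proof.
pose C i := (('C(n, i))%:R : R).
have Cn0 : forall i, (i <= n)%N -> C i != 0.
  by move=> i hi; rewrite /C pnatr_eq0 -lt0n bin_gt0.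
have step1 : forall h, @hilb_cone R k n h ->
   [/\ (forall i : nat, (n < i)%N -> h i = 0), 0 <= h n &
       (forall i : nat, (i < n)%N -> h i.+1 / ('C(n, i.+1))%:R <= h i / ('C(n, i))%:R)].
  move=> h [m [c [Mt [c0 Hh]]]]; split.
  - move=> i ni; rewrite Hh big1 // => t _; by rewrite hilb_zero // mulr0.
  - rewrite Hh; apply: sumr_ge0 => t _; exact: mulr_ge0 (c0 t) (ler0n _ _).
  - move=> i lin; rewrite !Hh !mulr_suml; apply: ler_sum => t _.
    rewrite -!mulrA; apply: ler_wpM2l => //; exact: hilb_ratio.
have step2 : forall h,
   [/\ (forall i : nat, (n < i)%N -> h i = 0), 0 <= h n &
       (forall i : nat, (i < n)%N -> h i.+1 / ('C(n, i.+1))%:R <= h i / ('C(n, i))%:R)] ->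
   conic_hull (@ray R n) h.
  move=> h [H0 Hn Hr]; exists (fun t : 'I_n.+1 => q n h t - q n h t.+1); split.
  - move=> t; have := ltn_ord t; rewrite ltnS leq_eqVlt => /orP [/eqP tn|tn].
      by rewrite /q tn (H0 n.+1) // mul0r subr0 binn divr1.
    by rewrite subr_ge0; exact: Hr.
  - move=> i; rewrite sum_ray; case: (leqP i n) => hi.
      rewrite telesc ?leqW // /q (H0 n.+1) // mul0r subr0 mulrC divfK //.
      exact: Cn0.
    by rewrite bin_small // mul0r; exact: H0.
have step3 : forall h, conic_hull (@ray R n) h -> @hilb_cone R k n h.
  move=> h [c [c0 Hh]]; exists n.+1, c, (fun t => TB k n t); split => // i.
  by rewrite Hh; apply: eq_bigr => t _; rewrite TB_hilb.
split.
  exists n.+1, (@ray R n); split; last first.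
    by move=> h; split => [/step1/step2|/step3].
  move=> c Hc.
  have S0 : forall i, (i <= n.+1)%N -> \sum_(t < n.+1 | (i <= t)%N) c t = 0.
    move=> i; rewrite leq_eqVlt => /orP [/eqP ->|hi].
      by rewrite big_pred0 // => t; rewrite leqNgt ltn_ord.
    have := Hc i; rewrite sum_ray => /eqP; rewrite mulf_eq0.
    by rewrite (negbTE (Cn0 _ _)) //= => /eqP.
  move=> t; have := S0 t (ltnW (ltn_ord t)); rewrite (bigD1 t) //=.
  rewrite (eq_bigl (fun u : 'I_n.+1 => (t.+1 <= u)%N)) ?S0 ?addr0 //.
  by move=> u; rewrite ltn_neqAle andbC eq_sym.
move=> h; split; first exact: step1.
by move/step2/step3.
Qed.
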